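(* Let $\mathcal M$ be a well-shaped tetrahedral mesh in $\mathbb R^3$ with parameter $\rho$, let $q$ be a point in $\mathcal M$, and let $p$ be a vertex of $\mathcal M$ nearest to $q$ among the vertices of $\mathcal M$. Let $\tau$ be the first tetrahedron of $\mathcal M$ intersected by the segment $pq$ when travelling from $p$ towards $q$ (so $p$ is a vertex of $\tau$), suppose $q$ is not in the interior of $\tau$, and let $p'$ be the intersection of $pq$ with the face of $\tau$ opposite to $p$. Then $|pp'|>\frac{6}{\rho^2+3}|pq|$.
   Context: A tetrahedral mesh is a subdivision of a region of $\mathbb R^3$ into tetrahedra, two tetrahedra being adjacent iff they share a face. It is well-shaped with parameter $\rho\ge3$ if every tetrahedron $t$ satisfies $R(t)/r(t)<\rho$, where $r(t)$ is the radius of the insphere and $R(t)$ the radius of the circumsphere of $t$. *)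

(* Defs.v *)
From Stdlib Require Import Reals Lra List Permutation.
Import ListNotations.
Open Scope R_scope.

Record pt : Type := Pt { px : R; py : R; pz : R }.

Definition padd (u v : pt) : pt := Pt (px u + px v) (py u + py v) (pz u + pz v).
Definition psub (u v : pt) : pt := Pt (px u - px v) (py u - py v) (pz u - pz v).
Definition pscale (k : R) (u : pt) : pt := Pt (k * px u) (k * py u) (k * pz u).
Definition dot (u v : pt) : R := px u * px v + py u * py v + pz u * pz v.
Definition cross (u v : pt) : pt :=
  Pt (py u * pz v - pz u * py v) (pz u * px v - px u * pz v) (px u * py v - py u * px v).
Definition pdist (u v : pt) : R := sqrt (dot (psub u v) (psub u v)).

Fixpoint in_conv (l : list pt) (x : pt) : Prop :=
  match l with
  | [] => False
  | v :: l' => x = v \/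
      exists (lam : R) (y : pt), 0 <= lam <= 1 /\ in_conv l' y /\
        x = padd (pscale lam v) (pscale (1 - lam) y)
  end.

Record tet : Type := Tet { ta : pt; tb : pt; tc : pt; td : pt }.
Definition verts (t : tet) : list pt := [ta t; tb t; tc t; td t].

Definition nondegenerate (t : tet) : Prop :=
  dot (psub (tb t) (ta t)) (cross (psub (tc t) (ta t)) (psub (td t) (ta t))) <> 0.

Definition in_tet (t : tet) (x : pt) : Prop := in_conv (verts t) x.

Definition in_interior (t : tet) (x : pt) : Prop :=
  exists eps, 0 < eps /\ forall y, pdist x y < eps -> in_tet t y.

Definition ball_in_tet (c : pt) (r : R) (t : tet) : Prop :=
  forall y, pdist c y <= r -> in_tet t y.

Definition is_inradius (t : tet) (r : R) : Prop :=
  0 < r /\ (exists c, ball_in_tet c r t) /\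
  (forall c r', ball_in_tet c r' t -> r' <= r).

Definition is_circumradius (t : tet) (Rc : R) : Prop :=
  exists c, pdist c (ta t) = Rc /\ pdist c (tb t) = Rc /\
            pdist c (tc t) = Rc /\ pdist c (td t) = Rc.

Definition is_tet_mesh (M : list tet) : Prop :=
  (forall t, In t M -> nondegenerate t) /\
  (forall i j t1 t2, i <> j -> nth_error M i = Some t1 -> nth_error M j = Some t2 ->
     (forall x, ~ (in_interior t1 x /\ in_interior t2 x)) /\
     exists S : list pt,
       (forall v, In v S <-> In v (verts t1) /\ In v (verts t2)) /\
       (forall x, in_tet t1 x /\ in_tet t2 x <-> in_conv S x)).

Definition well_shaped (rho : R) (M : list tet) : Prop :=
  3 <= rho /\
  forall t, In t M -> forall r Rc, is_inradius t r -> is_circumradius t Rc -> Rc / r < rho.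

Definition mesh_vertex (M : list tet) (v : pt) : Prop :=
  exists t, In t M /\ In v (verts t).

Definition in_mesh (M : list tet) (x : pt) : Prop :=
  exists t, In t M /\ in_tet t x.

(* Main.v *)
Require Import Defs.
From Stdlib Require Import Reals List Permutation Lra Psatz.
Import ListNotations.
Open Scope R_scope.
From Stdlib Require Import Lra Psatz.

Ltac Uf := unfold dot, cross, psub, padd, pscale in *; simpl in *.

Lemma pt_eq u v : px u = px v -> py u = py v -> pz u = pz v -> u = v.
Proof. destruct u, v; simpl; intros; subst; reflexivity. Qed.

Lemma dot_ge0 u : 0 <= dot u u.
Proof. Uf; nra. Qed.

Lemma cs2 u v : dot u v * dot u v <= dot u u * dot v v.
Proof. destruct u as [a b c], v as [x y z]; Uf.
  assert (E : (a*a+b*b+c*c)*(x*x+y*y+z*z) - (a*x+b*y+c*z)*(a*x+b*y+c*z)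
     = (a*y-b*x)^2 + (a*z-c*x)^2 + (b*z-c*y)^2) by ring.
  assert (0 <= (a*y-b*x)^2) by apply pow2_ge_0.
  assert (0 <= (a*z-c*x)^2) by apply pow2_ge_0.
  assert (0 <= (b*z-c*y)^2) by apply pow2_ge_0. lra. Qed.

Lemma cs u v : Rabs (dot u v) <= sqrt (dot u u) * sqrt (dot v v).
Proof.
  rewrite <- sqrt_mult_alt by apply dot_ge0.
  rewrite <- sqrt_Rsqr_abs. apply sqrt_le_1_alt. unfold Rsqr. apply cs2.
Qed.

Lemma conv_lower l x : in_conv l x -> forall n m,
  (forall v, In v l -> m <= dot n v) -> m <= dot n x.
Proof.
  revert x; induction l as [|v l IH]; simpl; intros x H n m Hv; [contradiction|].
  destruct H as [->|(lam & y & Hl & Hy & ->)]; [apply Hv; auto|].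
  assert (m <= dot n v) by (apply Hv; auto).
  assert (m <= dot n y) by (apply (IH y); auto).
  replace (dot n (padd (pscale lam v) (pscale (1 - lam) y)))
    with (lam * dot n v + (1-lam) * dot n y) by (Uf; ring). nra.
Qed.

Lemma conv_upper l x : in_conv l x -> forall n m,
  (forall v, In v l -> dot n v <= m) -> dot n x <= m.
Proof.
  intros H n m Hv.
  assert (-m <= dot (pscale (-1) n) x).
  { apply (conv_lower l x H). intros v Hi. specialize (Hv v Hi).
    replace (dot (pscale (-1) n) v) with (- dot n v) by (Uf; ring). lra. }
  replace (dot (pscale (-1) n) x) with (- dot n x) in H0 by (Uf; ring). lra.
Qed.

Lemma Rdiv_le_0_compat a b : 0 <= a -> 0 < b -> 0 <= a / b.
Proof. intros; unfold Rdiv; apply Rmult_le_pos; [auto| left; apply Rinv_0_lt_compat; auto]. Qed.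

Lemma conv3 P0 P1 P2 m0 m1 m2 : 0 <= m0 -> 0 <= m1 -> 0 <= m2 -> m0+m1+m2 = 1 ->
  in_conv [P0;P1;P2] (padd (pscale m0 P0) (padd (pscale m1 P1) (pscale m2 P2))).
Proof.
  intros H0 H1 H2 Hs. simpl.
  destruct (Req_dec m0 1) as [E|E].
  - right. exists 1, P1. split; [lra|]. split; [left; auto|].
    apply pt_eq; Uf; subst; replace m1 with 0 by lra; replace m2 with 0 by lra; ring.
  - right. exists m0, (padd (pscale (m1/(1-m0)) P1) (pscale (1 - m1/(1-m0)) P2)).
    split; [lra|]. split.
    + right. exists (m1/(1-m0)), P2. split.
      * split. apply Rdiv_le_0_compat; lra.
        apply (Rmult_le_reg_r (1-m0)); [lra|]. field_simplify; lra.
      * split; [left; auto|]. reflexivity.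
    + replace m2 with (1-m0-m1) by lra. apply pt_eq; Uf; field; lra.
Qed.

Lemma conv4 P0 P1 P2 P3 m0 m1 m2 m3 : 0 <= m0 -> 0 <= m1 -> 0 <= m2 -> 0 <= m3 ->
  m0+m1+m2+m3 = 1 ->
  in_conv [P0;P1;P2;P3]
   (padd (pscale m0 P0) (padd (pscale m1 P1) (padd (pscale m2 P2) (pscale m3 P3)))).
Proof.
  intros H0 H1 H2 H3 Hs.
  destruct (Req_dec m0 1) as [E|E].
  - right. exists 1, P1. split; [lra|]. split; [left; auto|].
    apply pt_eq; Uf; subst; replace m1 with 0 by lra; replace m2 with 0 by lra;
      replace m3 with 0 by lra; ring.
  - right. exists m0, (padd (pscale (m1/(1-m0)) P1) (padd (pscale (m2/(1-m0)) P2) (pscale (m3/(1-m0)) P3))).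
    split; [lra|]. split.
    + apply conv3; try (apply Rdiv_le_0_compat; lra). unfold Rdiv; rewrite <- !Rmult_plus_distr_r; replace (m1+m2+m3) with (1-m0) by lra; apply Rinv_r; lra.
    + apply pt_eq; Uf; field; lra.
Qed.

Definition D4 p0 p1 p2 p3 := dot (psub p1 p0) (cross (psub p2 p0) (psub p3 p0)).

Lemma perm3 x0 x1 x2 x3 y1 y2 y3 : Permutation [x1;x2;x3] [y1;y2;y3] ->
  D4 x0 x1 x2 x3 = D4 x0 y1 y2 y3 \/ D4 x0 x1 x2 x3 = - D4 x0 y1 y2 y3.
Proof.
  intro H.
  assert (Hi : In x1 [y1;y2;y3]) by (apply (Permutation_in _ H); left; auto).
  simpl in Hi. destruct Hi as [<-|[<-|[<-|[]]]].
  - apply (@Permutation_cons_app_inv _ _ [] [y2;y3]) in H. simpl in H.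
    apply Permutation_sym, Permutation_length_2_inv in H.
    destruct H as [H|H]; injection H as <- <-; unfold D4; Uf;
      [left; ring | right; ring].
  - apply (@Permutation_cons_app_inv _ _ [y1] [y3]) in H. simpl in H.
    apply Permutation_sym, Permutation_length_2_inv in H.
    destruct H as [H|H]; injection H as <- <-; unfold D4; Uf;
      [right; ring | left; ring].
  - apply (@Permutation_cons_app_inv _ _ [y1;y2] []) in H. simpl in H.
    apply Permutation_sym, Permutation_length_2_inv in H.
    destruct H as [H|H]; injection H as <- <-; unfold D4; Uf;
      [left; ring | right; ring].
Qed.

Lemma perm4 x0 x1 x2 x3 y0 y1 y2 y3 : Permutation [x0;x1;x2;x3] [y0;y1;y2;y3] ->
  D4 x0 x1 x2 x3 = D4 y0 y1 y2 y3 \/ D4 x0 x1 x2 x3 = - D4 y0 y1 y2 y3.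
Proof.
  intro H.
  assert (Hi : In x0 [y0;y1;y2;y3]) by (apply (Permutation_in _ H); left; auto).
  simpl in Hi. destruct Hi as [->|[->|[->|[->|[]]]]].
  - apply (@Permutation_cons_app_inv _ _ [] [y1;y2;y3]) in H. simpl in H.
    apply (perm3 x0) in H. exact H.
  - apply (@Permutation_cons_app_inv _ _ [y0] [y2;y3]) in H. simpl in H.
    apply (perm3 x0) in H.
    assert (E : D4 x0 y0 y2 y3 = - D4 y0 x0 y2 y3) by (unfold D4; Uf; ring). lra.
  - apply (@Permutation_cons_app_inv _ _ [y0;y1] [y3]) in H. simpl in H.
    apply (perm3 x0) in H.
    assert (E : D4 x0 y0 y1 y3 = D4 y0 y1 x0 y3) by (unfold D4; Uf; ring). lra.
  - apply (@Permutation_cons_app_inv _ _ [y0;y1;y2] []) in H. simpl in H.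
    apply (perm3 x0) in H.
    assert (E : D4 x0 y0 y1 y2 = - D4 y0 y1 y2 x0) by (unfold D4; Uf; ring). lra.
Qed.

Lemma circ_exists t : nondegenerate t -> exists Rc, is_circumradius t Rc.
Proof.
  destruct t as [P0 P1 P2 P3]. unfold nondegenerate, is_circumradius, pdist; simpl.
  set (e1 := psub P1 P0). set (e2 := psub P2 P0). set (e3 := psub P3 P0).
  set (D := dot e1 (cross e2 e3)). intro HD.
  set (w := pscale (1/(2*D)) (padd (pscale (dot e1 e1) (cross e2 e3))
        (padd (pscale (dot e2 e2) (cross e3 e1)) (pscale (dot e3 e3) (cross e1 e2))))).
  exists (sqrt (dot w w)). exists (padd P0 w).
  assert (E1 : dot (psub (padd P0 w) P0) (psub (padd P0 w) P0) = dot w w) by (unfold w; Uf; ring).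
  assert (E2 : forall e, dot (psub (padd P0 w) (padd P0 e)) (psub (padd P0 w) (padd P0 e))
     = dot w w - 2 * dot w e + dot e e) by (intro; Uf; ring).
  assert (W1 : 2 * dot w e1 = dot e1 e1) by (unfold w, D in *; clearbody e1 e2 e3; Uf; field; auto).
  assert (W2 : 2 * dot w e2 = dot e2 e2) by (unfold w, D in *; clearbody e1 e2 e3; Uf; field; auto).
  assert (W3 : 2 * dot w e3 = dot e3 e3) by (unfold w, D in *; clearbody e1 e2 e3; Uf; field; auto).
  assert (Q1 : P1 = padd P0 e1) by (apply pt_eq; unfold e1; Uf; ring).
  assert (Q2 : P2 = padd P0 e2) by (apply pt_eq; unfold e2; Uf; ring).
  assert (Q3 : P3 = padd P0 e3) by (apply pt_eq; unfold e3; Uf; ring).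
  repeat split.
  - rewrite E1; auto.
  - rewrite Q1 at 1 2. rewrite E2. f_equal. lra.
  - rewrite Q2 at 1 2. rewrite E2. f_equal. lra.
  - rewrite Q3 at 1 2. rewrite E2. f_equal. lra.
Qed.

Definition NN1 (P0 P1 P2 P3 : pt) := cross (psub P2 P0) (psub P3 P0).
Definition NN2 (P0 P1 P2 P3 : pt) := cross (psub P3 P0) (psub P1 P0).
Definition NN3 (P0 P1 P2 P3 : pt) := cross (psub P1 P0) (psub P2 P0).
Definition NN0 (P0 P1 P2 P3 : pt) :=
  pscale (-1) (padd (NN1 P0 P1 P2 P3) (padd (NN2 P0 P1 P2 P3) (NN3 P0 P1 P2 P3))).
Definition Lf (N : pt) (k : R) (P0 : pt) (D : R) (x : pt) := dot N (psub x P0) / D + k.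

Lemma conv_aff l x N k P0 D : in_conv l x -> D <> 0 ->
  (forall v, In v l -> 0 <= Lf N k P0 D v) -> 0 <= Lf N k P0 D x.
Proof.
  intros H HD Hv.
  set (n := pscale (1/D) N).
  assert (E : forall v, Lf N k P0 D v = dot n v - (dot n P0 - k))
    by (intro; unfold n, Lf; Uf; field; auto).
  rewrite E. enough (dot n P0 - k <= dot n x) by lra.
  apply (conv_lower l x H). intros v Hi. specialize (Hv v Hi). rewrite E in Hv. lra.
Qed.

Lemma Lf_add N k P0 D x v : D <> 0 ->
  Lf N k P0 D (padd x v) = Lf N k P0 D x + dot N v / D.
Proof. intro; unfold Lf; Uf; field; auto. Qed.

Lemma lam_bound N v D a d : a = sqrt (dot N N) -> sqrt (dot v v) <= d -> D <> 0 ->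
  dot N v / D >= - (a * d / Rabs D).
Proof.
  intros Ha Hd HD. pose proof (cs N v) as C. rewrite <- Ha in C.
  assert (0 <= a) by (rewrite Ha; apply sqrt_pos).
  assert (Rabs (dot N v) <= a * d) by (eapply Rle_trans; [exact C|]; apply Rmult_le_compat_l; auto).
  set (z := dot N v) in *.
  assert (H1 : - (a*d) <= z) by (unfold Rabs in H0; destruct (Rcase_abs z); lra).
  assert (H2 : z <= a*d) by (unfold Rabs in H0; destruct (Rcase_abs z); lra).
  destruct (Rcase_abs D) as [Hn|Hp].
  - rewrite Rabs_left by auto.
    assert (0 <= (a*d - z) / (-D)) by (apply Rdiv_le_0_compat; lra).
    replace (z / D) with (- (a * d / - D) + (a*d - z)/(-D)) by (field; lra). lra.
  - rewrite Rabs_right by auto.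
    assert (0 <= (z + a*d) / D) by (apply Rdiv_le_0_compat; lra).
    replace (z / D) with (- (a * d / D) + (z + a*d)/D) by (field; lra). lra.
Qed.

Section Tet.
Variables P0 P1 P2 P3 : pt.
Let D := D4 P0 P1 P2 P3.
Let N1 := NN1 P0 P1 P2 P3.
Let N2 := NN2 P0 P1 P2 P3.
Let N3 := NN3 P0 P1 P2 P3.
Let N0 := NN0 P0 P1 P2 P3.
Hypothesis HD : D <> 0.

Ltac unf := unfold D, N1, N2, N3, N0, NN0, NN1, NN2, NN3, D4, Lf in *; Uf.

Lemma vals1 : Lf N1 0 P0 D P0 = 0 /\ Lf N1 0 P0 D P1 = 1 /\ Lf N1 0 P0 D P2 = 0 /\ Lf N1 0 P0 D P3 = 0.
Proof. pose proof HD. unf; repeat split; field; auto. Qed.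
Lemma vals2 : Lf N2 0 P0 D P0 = 0 /\ Lf N2 0 P0 D P1 = 0 /\ Lf N2 0 P0 D P2 = 1 /\ Lf N2 0 P0 D P3 = 0.
Proof. pose proof HD. unf; repeat split; field; auto. Qed.
Lemma vals3 : Lf N3 0 P0 D P0 = 0 /\ Lf N3 0 P0 D P1 = 0 /\ Lf N3 0 P0 D P2 = 0 /\ Lf N3 0 P0 D P3 = 1.
Proof. pose proof HD. unf; repeat split; field; auto. Qed.
Lemma vals0 : Lf N0 1 P0 D P0 = 1 /\ Lf N0 1 P0 D P1 = 0 /\ Lf N0 1 P0 D P2 = 0 /\ Lf N0 1 P0 D P3 = 0.
Proof. pose proof HD. unf; repeat split; field; auto. Qed.

Lemma Lpos N k x : in_conv [P0;P1;P2;P3] x ->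
  Lf N k P0 D P0 = 0 \/ Lf N k P0 D P0 = 1 ->
  Lf N k P0 D P1 = 0 \/ Lf N k P0 D P1 = 1 ->
  Lf N k P0 D P2 = 0 \/ Lf N k P0 D P2 = 1 ->
  Lf N k P0 D P3 = 0 \/ Lf N k P0 D P3 = 1 ->
  0 <= Lf N k P0 D x.
Proof.
  intros H h0 h1 h2 h3. apply (conv_aff _ _ _ _ _ _ H HD).
  intros v Hv; simpl in Hv; destruct Hv as [<-|[<-|[<-|[<-|[]]]]]; lra.
Qed.

Lemma Lsum x : Lf N1 0 P0 D x + Lf N2 0 P0 D x + Lf N3 0 P0 D x + Lf N0 1 P0 D x = 1.
Proof. pose proof HD. unf; field; auto. Qed.

Lemma cramer x : x = padd (pscale (Lf N0 1 P0 D x) P0) (padd (pscale (Lf N1 0 P0 D x) P1)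
   (padd (pscale (Lf N2 0 P0 D x) P2) (pscale (Lf N3 0 P0 D x) P3))).
Proof. pose proof HD. apply pt_eq; unf; field; auto. Qed.

Lemma Npos N e : dot N e = D \/ dot N e = - D -> 0 < sqrt (dot N N).
Proof.
  intro H. apply sqrt_lt_R0. pose proof (cs2 N e). pose proof (dot_ge0 N). pose proof (dot_ge0 e).
  destruct (Req_dec (dot N N) 0) as [E|E]; [|lra].
  rewrite E in H0. assert (D * D > 0) by (apply Rsqr_pos_lt; auto).
  destruct H; rewrite H in H0; nra.
Qed.

End Tet.

Lemma in_exists t : nondegenerate t -> exists r, is_inradius t r.
Proof.
  destruct t as [P0 P1 P2 P3]. unfold nondegenerate, is_inradius, ball_in_tet, in_tet, verts; simpl.
  intro HD. change (D4 P0 P1 P2 P3 <> 0) in HD.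
  set (D := D4 P0 P1 P2 P3) in *.
  set (N1 := NN1 P0 P1 P2 P3). set (N2 := NN2 P0 P1 P2 P3).
  set (N3 := NN3 P0 P1 P2 P3). set (N0 := NN0 P0 P1 P2 P3).
  pose proof (vals1 P0 P1 P2 P3 HD) as V1. pose proof (vals2 P0 P1 P2 P3 HD) as V2.
  pose proof (vals3 P0 P1 P2 P3 HD) as V3. pose proof (vals0 P0 P1 P2 P3 HD) as V0.
  fold D N1 N2 N3 N0 in V1, V2, V3, V0.
  assert (Hpos : forall N k x, in_conv [P0;P1;P2;P3] x ->
     (Lf N k P0 D P0 = 0 \/ Lf N k P0 D P0 = 1) ->
     (Lf N k P0 D P1 = 0 \/ Lf N k P0 D P1 = 1) ->
     (Lf N k P0 D P2 = 0 \/ Lf N k P0 D P2 = 1) ->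
     (Lf N k P0 D P3 = 0 \/ Lf N k P0 D P3 = 1) -> 0 <= Lf N k P0 D x)
    by (intros; apply (Lpos P0 P1 P2 P3 HD); auto).
  assert (L1 : forall x, in_conv [P0;P1;P2;P3] x -> 0 <= Lf N1 0 P0 D x)
    by (intros; apply Hpos; auto; lra).
  assert (L2 : forall x, in_conv [P0;P1;P2;P3] x -> 0 <= Lf N2 0 P0 D x)
    by (intros; apply Hpos; auto; lra).
  assert (L3 : forall x, in_conv [P0;P1;P2;P3] x -> 0 <= Lf N3 0 P0 D x)
    by (intros; apply Hpos; auto; lra).
  assert (L0 : forall x, in_conv [P0;P1;P2;P3] x -> 0 <= Lf N0 1 P0 D x)
    by (intros; apply Hpos; auto; lra).
  pose proof (Lsum P0 P1 P2 P3 HD) as LS. fold D N1 N2 N3 N0 in LS.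
  set (a1 := sqrt (dot N1 N1)). set (a2 := sqrt (dot N2 N2)).
  set (a3 := sqrt (dot N3 N3)). set (a0 := sqrt (dot N0 N0)).
  assert (A1 : 0 < a1) by (apply (Npos P0 P1 P2 P3 HD) with (e := psub P1 P0); left; unfold N1, D, NN1, D4; Uf; ring).
  assert (A2 : 0 < a2) by (apply (Npos P0 P1 P2 P3 HD) with (e := psub P2 P0); left; unfold N2, D, NN2, D4; Uf; ring).
  assert (A3 : 0 < a3) by (apply (Npos P0 P1 P2 P3 HD) with (e := psub P3 P0); left; unfold N3, D, NN3, D4; Uf; ring).
  assert (A0 : 0 < a0) by (apply (Npos P0 P1 P2 P3 HD) with (e := psub P1 P0); right; unfold N0, D, NN0, NN1, NN2, NN3, D4; Uf; ring).
  set (S := a0 + a1 + a2 + a3).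
  assert (HS : 0 < S) by (unfold S; lra).
  assert (HaD : 0 < Rabs D) by (apply Rabs_pos_lt; auto).
  exists (Rabs D / S). split; [apply Rdiv_lt_0_compat; auto|]. split.
  - (* incenter *)
    set (c1 := a1 / S). set (c2 := a2 / S). set (c3 := a3 / S).
    exists (padd P0 (padd (pscale c1 (psub P1 P0)) (padd (pscale c2 (psub P2 P0)) (pscale c3 (psub P3 P0))))).
    set (I := padd P0 _). intros y Hy.
    assert (Ey : y = padd I (psub y I)) by (apply pt_eq; Uf; ring).
    assert (Hn : sqrt (dot (psub y I) (psub y I)) <= Rabs D / S).
    { replace (dot (psub y I) (psub y I)) with (dot (psub I y) (psub I y)) by (Uf; ring). exact Hy. }
    assert (I1 : Lf N1 0 P0 D I = c1) by (clearbody c1 c2 c3; unfold I, N1, D, NN1, D4, Lf; Uf; field; auto).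
    assert (I2 : Lf N2 0 P0 D I = c2) by (clearbody c1 c2 c3; unfold I, N2, D, NN2, D4, Lf; Uf; field; auto).
    assert (I3 : Lf N3 0 P0 D I = c3) by (clearbody c1 c2 c3; unfold I, N3, D, NN3, D4, Lf; Uf; field; auto).
    assert (I0 : Lf N0 1 P0 D I = a0 / S).
    { pose proof (LS I) as LI. rewrite I1, I2, I3 in LI.
      unfold c1, c2, c3 in LI. apply (Rmult_eq_reg_r S); [|lra].
      field_simplify; [|lra]. unfold S in *.
      assert (E : a1 / (a0+a1+a2+a3) + a2 / (a0+a1+a2+a3) + a3 / (a0+a1+a2+a3) = (a1+a2+a3)/(a0+a1+a2+a3)) by (field; lra).
      rewrite E in LI. 
      assert (Lf N0 1 P0 D I = 1 - (a1+a2+a3)/(a0+a1+a2+a3)) by lra. rewrite H. field. lra. }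
    assert (B : forall N k a c, a = sqrt (dot N N) -> Lf N k P0 D I = c -> c = a / S ->
               0 <= Lf N k P0 D y).
    { intros N k a c Ha HI Hc. rewrite Ey, Lf_add by auto. rewrite HI.
      pose proof (lam_bound N (psub y I) D a (Rabs D / S) Ha Hn HD) as LB.
      replace (a * (Rabs D / S) / Rabs D) with (a / S) in LB by (field; lra). lra. }
    rewrite (cramer P0 P1 P2 P3 HD y). fold D N0 N1 N2 N3.
    apply conv4.
    + apply (B N0 1 a0 (a0/S)); auto.
    + apply (B N1 0 a1 c1); auto.
    + apply (B N2 0 a2 c2); auto.
    + apply (B N3 0 a3 c3); auto.
    + pose proof (LS y); lra.
  -
    intros c r' Hb.
    destruct (Rlt_or_le r' 0) as [Hr|Hr].
    { assert (0 < Rabs D / S) by (apply Rdiv_lt_0_compat; auto). lra. }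
    set (sg := D / Rabs D).
    assert (Hsg : sg * sg = 1).
    { unfold sg. destruct (Rcase_abs D); [rewrite Rabs_left|rewrite Rabs_right]; auto; field; lra. }
    assert (G : forall N k a, a = sqrt (dot N N) -> 0 < a ->
       (forall x, in_conv [P0;P1;P2;P3] x -> 0 <= Lf N k P0 D x) ->
       Lf N k P0 D c - r' * a / Rabs D >= 0).
    { intros N k a Ha Hapos HL.
      set (y := padd c (pscale (- (r' * sg / a)) N)).
      assert (Haa : a * a = dot N N) by (rewrite Ha; apply sqrt_sqrt; apply dot_ge0).
      assert (Hy : in_conv [P0;P1;P2;P3] y -> 0 <= Lf N k P0 D y -> Lf N k P0 D c - r' * a / Rabs D >= 0).
      { intros _ H. unfold y in H. rewrite Lf_add in H by auto.
        replace (dot N (pscale (- (r' * sg / a)) N) / D) with (- (r' * sg / a) * (a * a) / D) in H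
          by (rewrite Haa; Uf; field; split; lra).
        replace (- (r' * sg / a) * (a * a) / D) with (- (r' * a / Rabs D)) in H. lra.
        unfold sg. field. split; lra. }
      assert (Hin : in_conv [P0;P1;P2;P3] y).
      { apply Hb. unfold pdist. replace (dot (psub c y) (psub c y)) with (r' ^ 2).
        rewrite sqrt_pow2; lra.
        unfold y. transitivity ((r' * sg / a) ^ 2 * dot N N); [| Uf; ring].
        rewrite <- Haa.
        replace ((r'*sg/a)^2*(a*a)) with (r'^2*(sg*sg)) by (field; lra). rewrite Hsg; ring. }
      apply Hy; auto. }
    pose proof (G N1 0 a1 eq_refl A1 L1). pose proof (G N2 0 a2 eq_refl A2 L2).
    pose proof (G N3 0 a3 eq_refl A3 L3). pose proof (G N0 1 a0 eq_refl A0 L0).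
    pose proof (LS c).
    assert (r' * S / Rabs D <= 1).
    { replace (r' * S / Rabs D) with (r' * a1 / Rabs D + r' * a2 / Rabs D + r' * a3 / Rabs D + r' * a0 / Rabs D)
        by (unfold S; field; lra). lra. }
    apply (Rmult_le_reg_r (S / Rabs D)). apply Rdiv_lt_0_compat; auto.
    replace (Rabs D / S * (S / Rabs D)) with 1 by (field; lra).
    replace (r' * (S / Rabs D)) with (r' * S / Rabs D) by (field; lra). lra.
Qed.

Lemma sq_of_sqrt X Rc : sqrt X = Rc -> 0 <= X -> X = Rc * Rc.
Proof. intros <- H. rewrite sqrt_sqrt; auto. Qed.

Theorem mainTheorem16 (M : list tet) (rho : R) (q p : pt) (tau : tet)
    (a b c p' : pt) :
  is_tet_mesh M ->
  well_shaped rho M ->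
  in_mesh M q ->
  (* p is a vertex of M nearest to q *)
  mesh_vertex M p ->
  (forall v, mesh_vertex M v -> pdist q p <= pdist q v) ->
  (* tau is a tetrahedron of M with vertices p, a, b, c *)
  In tau M ->
  Permutation (verts tau) [p; a; b; c] ->
  (* tau is the first tetrahedron met by the segment pq leaving p *)
  (exists eps, 0 < eps /\
     forall s, 0 < s <= eps -> in_tet tau (padd p (pscale s (psub q p)))) ->
  ~ in_interior tau q ->
  (* p' is the intersection of pq with the face of tau opposite to p *)
  (exists s, 0 <= s <= 1 /\ p' = padd p (pscale s (psub q p))) ->
  in_conv [a; b; c] p' ->
  pdist p p' > 6 / (rho ^ 2 + 3) * pdist p q.
Proof.
  intros [HM1 _] [Hrho HW] _ _ Hnear Htau Hperm _ _ (s & Hs & Hp') Hconv.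
  assert (HND : nondegenerate tau) by (apply HM1; auto).
  destruct (in_exists tau HND) as [r Hr]. destruct (circ_exists tau HND) as [Rc HRc].
  specialize (HW tau Htau r Rc Hr HRc).
  assert (Hin : forall v, In v [p;a;b;c] -> In v (verts tau))
    by (intros v Hv; apply (Permutation_in _ (Permutation_sym Hperm)); auto).
  assert (Hin' : forall v, In v (verts tau) -> In v [p;a;b;c])
    by (intros v Hv; apply (Permutation_in _ Hperm); auto).
  assert (HDet : D4 p a b c <> 0).
  { destruct tau as [t0 t1 t2 t3]. unfold verts in Hperm; simpl in Hperm.
    unfold nondegenerate in HND; simpl in HND. change (D4 t0 t1 t2 t3 <> 0) in HND.
    apply perm4 in Hperm. lra. }
  destruct Hr as [Hr0 [[c0 Hball] _]].
  set (n := cross (psub b a) (psub c a)).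
  assert (Hnp : dot n (psub p a) = - D4 p a b c) by (unfold n, D4; Uf; ring).
  assert (Hnn : 0 < dot n n).
  { pose proof (cs2 n (psub p a)). pose proof (dot_ge0 n). pose proof (dot_ge0 (psub p a)).
    rewrite Hnp in H. assert (D4 p a b c * D4 p a b c > 0) by (apply Rsqr_pos_lt; auto).
    destruct (Req_dec (dot n n) 0) as [E|E]; [rewrite E in H; nra | lra]. }
  set (ln := sqrt (dot n n)).
  assert (Hln : 0 < ln) by (apply sqrt_lt_R0; auto).
  assert (Hlnn : ln * ln = dot n n) by (apply sqrt_sqrt; lra).
  set (u := pscale (1/ln) n).
  assert (Huu : dot u u = 1).
  { unfold u. replace (dot (pscale (1/ln) n) (pscale (1/ln) n)) with (dot n n / (ln*ln)) by (Uf; field; lra).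
    rewrite Hlnn; field; lra. }
  set (k := dot u a). assert (Hua : dot u a = k) by reflexivity.
  assert (Hub : dot u b = k).
  { unfold k. replace (dot u b) with (dot u a + dot n (psub b a) / ln) by (unfold u; Uf; field; lra).
    replace (dot n (psub b a)) with 0 by (unfold n; Uf; ring). field; lra. }
  assert (Huc : dot u c = k).
  { unfold k. replace (dot u c) with (dot u a + dot n (psub c a) / ln) by (unfold u; Uf; field; lra).
    replace (dot n (psub c a)) with 0 by (unfold n; Uf; ring). field; lra. }
  assert (Hup' : dot u p' = k).
  { apply Rle_antisym.
    - apply (conv_upper _ _ Hconv). intros v Hv; simpl in Hv.
      destruct Hv as [<-|[<-|[<-|[]]]]; lra.
    - apply (conv_lower _ _ Hconv). intros v Hv; simpl in Hv.
      destruct Hv as [<-|[<-|[<-|[]]]]; lra. }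
  assert (Hvb : forall v, In v (verts tau) ->
            Rmin (dot u p) k <= dot u v <= Rmax (dot u p) k).
  { intros v Hv. apply Hin' in Hv. simpl in Hv.
    pose proof (Rmin_l (dot u p) k). pose proof (Rmin_r (dot u p) k).
    pose proof (Rmax_l (dot u p) k). pose proof (Rmax_r (dot u p) k).
    destruct Hv as [<-|[<-|[<-|[<-|[]]]]]; lra. }
  assert (Hball2 : forall e, e = r \/ e = - r -> in_tet tau (padd c0 (pscale e u))).
  { intros e He. apply Hball. unfold pdist.
    replace (dot (psub c0 (padd c0 (pscale e u))) (psub c0 (padd c0 (pscale e u))))
      with (e * e * dot u u) by (Uf; ring).
    rewrite Huu. replace (e*e*1) with (r*r) by (destruct He; subst; ring).
    rewrite sqrt_square; lra. }
  assert (Y1 := Hball2 r (or_introl eq_refl)). assert (Y2 := Hball2 (-r) (or_intror eq_refl)).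
  unfold in_tet in Y1, Y2.
  assert (Z1 : dot u (padd c0 (pscale r u)) <= Rmax (dot u p) k)
    by (apply (conv_upper _ _ Y1); intros; apply Hvb; auto).
  assert (Z2 : Rmin (dot u p) k <= dot u (padd c0 (pscale (-r) u)))
    by (apply (conv_lower _ _ Y2); intros; apply Hvb; auto).
  replace (dot u (padd c0 (pscale r u))) with (dot u c0 + r * dot u u) in Z1 by (Uf; ring).
  replace (dot u (padd c0 (pscale (-r) u))) with (dot u c0 - r * dot u u) in Z2 by (Uf; ring).
  rewrite Huu in Z1, Z2.
  assert (Ht : 2 * r <= pdist p p').
  { pose proof (cs u (psub p p')) as C. rewrite Huu, sqrt_1, Rmult_1_l in C.
    replace (dot u (psub p p')) with (dot u p - k) in C by (rewrite <- Hup'; Uf; ring).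
    unfold pdist. eapply Rle_trans; [|exact C].
    unfold Rmin, Rmax in *. destruct (Rle_dec (dot u p) k); unfold Rabs; destruct (Rcase_abs (dot u p - k)); lra. }
  destruct HRc as [o Ho].
  assert (Hov : forall v, In v [p;a;b;c] -> dot (psub o v) (psub o v) = Rc * Rc).
  { intros v Hv. apply Hin in Hv. destruct tau as [t0 t1 t2 t3]. simpl in Hv, Ho.
    destruct Ho as [H0 [H1 [H2 H3]]]; unfold pdist in *.
    destruct Hv as [<-|[<-|[<-|[<-|[]]]]]; apply sq_of_sqrt; auto; apply dot_ge0. }
  assert (HRc0 : 0 <= Rc).
  { destruct tau as [t0 t1 t2 t3]; simpl in Ho. destruct Ho as [H0 _]. rewrite <- H0; apply sqrt_pos. }
  assert (Hq : forall v, In v [a;b;c] -> dot (psub q p) (psub q p) <= dot (psub q v) (psub q v)).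
  { intros v Hv. apply sqrt_le_0; try apply dot_ge0. apply Hnear. exists tau. split; auto.
    apply Hin. simpl in Hv |- *. tauto. }
  set (m := psub o q).
  assert (Hlow : dot m p <= dot m p').
  { apply (conv_lower _ _ Hconv). intros v Hv.
    pose proof (Hq v Hv). pose proof (Hov v (or_intror Hv)). pose proof (Hov p (or_introl eq_refl)).
    assert (E : 2 * (dot m v - dot m p) = (dot (psub q v) (psub q v) - dot (psub q p) (psub q p))
        - (dot (psub o v) (psub o v) - dot (psub o p) (psub o p))) by (unfold m; Uf; ring).
    lra. }
  assert (Hs0 : 0 < s).
  { destruct Hs as [Hs1 Hs2]. destruct (Req_dec s 0) as [E|E]; [|lra].
    exfalso. subst s. assert (p' = p) by (rewrite Hp'; apply pt_eq; Uf; ring).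
    rewrite H in Ht. assert (pdist p p = 0).
    { unfold pdist. replace (dot (psub p p) (psub p p)) with 0 by (Uf; ring). apply sqrt_0. }
    lra. }
  assert (Hmq : 0 <= dot m (psub q p)).
  { replace (dot m p') with (dot m p + s * dot m (psub q p)) in Hlow by (rewrite Hp'; Uf; ring).
    nra. }
  set (d := pdist p q).
  assert (Hd0 : 0 <= d) by apply sqrt_pos.
  assert (Hdd : d * d = dot (psub q p) (psub q p)).
  { unfold d, pdist. rewrite sqrt_sqrt by apply dot_ge0. Uf; ring. }
  assert (HdR : d <= Rc).
  { pose proof (cs (psub o p) (psub q p)) as C.
    assert (sqrt (dot (psub o p) (psub o p)) = Rc).
    { rewrite (Hov p (or_introl eq_refl)). apply sqrt_square; auto. }
    assert (sqrt (dot (psub q p) (psub q p)) = d).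
    { unfold d, pdist. f_equal. Uf; ring. }
    rewrite H, H0 in C.
    assert (E : dot (psub o p) (psub q p) = dot m (psub q p) + dot (psub q p) (psub q p)) by (unfold m; Uf; ring).
    assert (d * d <= Rc * d).
    { rewrite Hdd. pose proof (Rle_abs (dot (psub o p) (psub q p))). lra. }
    destruct (Req_dec d 0); [lra|]. nra. }
  assert (Hr' : Rc < rho * r).
  { apply (Rmult_lt_compat_r r) in HW; auto. unfold Rdiv in HW.
    rewrite Rmult_assoc, Rinv_l, Rmult_1_r in HW; lra. }
  set (t := pdist p p') in *.
  assert (Hpos : 0 < rho ^ 2 + 3) by nra.
  assert (X : 6 * d < t * (rho ^ 2 + 3)).
  { assert (2 * r * (rho^2+3) - 6 * (rho * r) = 2 * r * ((rho - 3/2)^2 + 3/4)) by field.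
    assert (0 < 2 * r * ((rho - 3/2)^2 + 3/4)) by (apply Rmult_lt_0_compat; nra).
    assert (2 * r * (rho^2+3) <= t * (rho^2+3)) by (apply Rmult_le_compat_r; lra).
    lra. }
  apply Rlt_gt. replace (6 / (rho ^ 2 + 3) * d) with (6 * d / (rho ^ 2 + 3)) by (field; lra).
  apply (Rmult_lt_reg_r (rho ^ 2 + 3)); auto.
  replace (6 * d / (rho ^ 2 + 3) * (rho ^ 2 + 3)) with (6 * d) by (field; lra). lra.
Qed.
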